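(* Let $G$ be a claw-free graph, let $L$ be an induced path or a hole of $G$, and let $\mathbf{j}\notin L$ be a vertex such that $\Gamma_L(\mathbf{j})$ contains three vertices $\mathbf{k}_0,\mathbf{k}_1,\mathbf{k}_2$ with $\mathbf{k}_0\mathbf{k}_1$ and $\mathbf{k}_1\mathbf{k}_2$ edges of $L$. If $\mathbf{j}$ has an additional neighbour $\mathbf{u}\in L\setminus\{\mathbf{k}_0,\mathbf{k}_1,\mathbf{k}_2\}$, then $\mathbf{u}$ is adjacent to at least one of $\mathbf{k}_0$ or $\mathbf{k}_2$.
   Context: A hole is an induced cycle of length at least 4; an induced path is a vertex set whose induced edges are exactly those between consecutive vertices. Claw-free: no induced $K_{1,3}$. $\Gamma_L(\mathbf{j})$ is the set of neighbours of $\mathbf{j}$ in $L$. *)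

(* Defs.v *)
From mathcomp Require Import all_boot.
Set Implicit Arguments. Unset Strict Implicit. Unset Printing Implicit Defensive.

(* A simple graph on a finite vertex type T is a symmetric irreflexive
   relation e : rel T (hypotheses stated in the theorem). *)

Definition claw_free (T : finType) (e : rel T) : Prop :=
  forall x a b c : T, a != b -> b != c -> a != c ->
    e x a -> e x b -> e x c -> [|| e a b, e b c | e a c].

Definition path_edges (T : eqType) (L : seq T) : seq (T * T) := zip L (behead L).
Definition cycle_edges (T : eqType) (L : seq T) : seq (T * T) := zip L (rot 1 L).

Definition is_edge_of (T : eqType) (E : seq (T * T)) (x y : T) : bool :=
  ((x, y) \in E) || ((y, x) \in E).

Definition induced_path (T : finType) (e : rel T) (L : seq T) : Prop :=
  uniq L /\ {in L &, forall x y, e x y = is_edge_of (path_edges L) x y}.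

Definition hole (T : finType) (e : rel T) (L : seq T) : Prop :=
  [/\ 4 <= size L, uniq L &
      {in L &, forall x y, e x y = is_edge_of (cycle_edges L) x y}].

(* Main.v *)
Require Import Defs.
From mathcomp Require Import all_boot zify.

Definition Rs (n a b : nat) := (b == a.+1) || ((a.+1 == n) && (b == 0)).

Lemma zip_nth (T : eqType) (L s : seq T) x y :
  size s = size L -> (x, y) \in zip L s ->
  exists2 i, i < size L & x = nth x L i /\ y = nth x s i.
Proof.
move=> hs /(nthP (x, x)) [i hi]; rewrite nth_zip_cond hi => -[hx hy].
rewrite size_zip hs minnn in hi; by exists i.
Qed.

Lemma cyc_idx (T : eqType) (L : seq T) x y : uniq L ->
  (x, y) \in cycle_edges L -> Rs (size L) (index x L) (index y L).
Proof.
move=> u h; have [i hi [-> ->]] := @zip_nth _ _ _ _ _ (size_rot 1 L) h.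
rewrite index_uniq //.
case: L u hi h => [//|a l] u hi _.
rewrite rot1_cons nth_rcons.
case: ltnP => hil.
  rewrite -[nth _ l i]/(nth _ (a :: l) i.+1) index_uniq //=. by rewrite /Rs eqxx.
have e : i = size l by move: hi => /=; lia.
rewrite e eqxx /= eqxx /Rs; apply/orP; right; by rewrite !eqxx.
Qed.

Lemma path_idx (T : eqType) (L : seq T) x y : uniq L ->
  (x, y) \in path_edges L -> index y L = (index x L).+1.
Proof.
move=> u; case: L u => [//|a l] u h.
have [i hi [-> ->]] : exists2 i, i < size l & x = nth x (a :: l) i /\ y = nth x l i.
  move: h => /(nthP (x, x)) [i hi]; rewrite nth_zip_cond hi => -[hx hy].
  rewrite size_zip /= in hi; exists i; [lia | split; [exact: esym hx | exact: esym hy]].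
rewrite -[nth _ l i]/(nth _ (a :: l) i.+1) !index_uniq //=; exact: ltnW.
Qed.

Lemma no_tri_path (T : eqType) (L : seq T) a b c : uniq L ->
  a \in L -> b \in L -> c \in L -> a != b -> b != c -> a != c ->
  is_edge_of (path_edges L) a b -> is_edge_of (path_edges L) b c ->
  ~~ is_edge_of (path_edges L) a c.
Proof.
move=> u ha hb hc nab nbc nac.
have ia : index a L != index b L by apply: contra nab => /eqP /(index_inj a ha hb) ->.
have ib : index b L != index c L by apply: contra nbc => /eqP /(index_inj a hb hc) ->.
have ic : index a L != index c L by apply: contra nac => /eqP /(index_inj a ha hc) ->.
rewrite /is_edge_of.
move=> /orP [] /(@path_idx _ _ _ _ u) h1 /orP [] /(@path_idx _ _ _ _ u) h2;
  apply/negP => /orP [] /(@path_idx _ _ _ _ u) h3; lia.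
Qed.

Lemma no_tri_cyc (T : eqType) (L : seq T) a b c : uniq L -> 4 <= size L ->
  a \in L -> b \in L -> c \in L -> a != b -> b != c -> a != c ->
  is_edge_of (cycle_edges L) a b -> is_edge_of (cycle_edges L) b c ->
  ~~ is_edge_of (cycle_edges L) a c.
Proof.
move=> u s4 ha hb hc nab nbc nac.
have ia : index a L != index b L by apply: contra nab => /eqP /(index_inj a ha hb) ->.
have ib : index b L != index c L by apply: contra nbc => /eqP /(index_inj a hb hc) ->.
have ic : index a L != index c L by apply: contra nac => /eqP /(index_inj a ha hc) ->.
have la : index a L < size L by rewrite index_mem.
have lb : index b L < size L by rewrite index_mem.
have lc : index c L < size L by rewrite index_mem.
rewrite /is_edge_of /Rs.
move=> /orP [] /(@cyc_idx _ _ _ _ u) h1 /orP [] /(@cyc_idx _ _ _ _ u) h2;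
  apply/negP => /orP [] /(@cyc_idx _ _ _ _ u) h3; move: h1 h2 h3; rewrite /Rs; lia.
Qed.

Theorem corollary2 (T : finType) (e : rel T)
    (e_sym : symmetric e) (e_irr : irreflexive e)
    (hclaw : claw_free e)
    (L : seq T) (j k0 k1 k2 u : T) :
    ((induced_path e L /\ is_edge_of (path_edges L) k0 k1
                        /\ is_edge_of (path_edges L) k1 k2)
     \/ (hole e L /\ is_edge_of (cycle_edges L) k0 k1
                  /\ is_edge_of (cycle_edges L) k1 k2)) ->
    j \notin L ->
    k0 \in L -> k1 \in L -> k2 \in L ->
    k0 != k1 -> k1 != k2 -> k0 != k2 ->
    e j k0 -> e j k1 -> e j k2 ->
    u \in L -> e j u -> u \notin [:: k0; k1; k2] ->
    e u k0 || e u k2.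
Proof.
move=> H _ h0 h1 h2 n01 n12 n02 j0 _ j2 hu ju.
rewrite !inE !negb_or => /and3P [nu0 nu1 nu2].
have n02' : ~~ e k0 k2.
  case: H => [[[uL eL] [e1 e2]] | [[s4 uL eL] [e1 e2]]]; rewrite eL //.
    exact: no_tri_path e1 e2.
  exact: no_tri_cyc e1 e2.
have := hclaw j k0 k2 u n02 _ _ j0 j2 ju.
rewrite eq_sym nu2 eq_sym nu0 (negbTE n02') /= => /(_ isT isT) /orP [] h.
  by rewrite (e_sym u k0) (e_sym u k2) h ?orbT.
by rewrite (e_sym u k0) (e_sym u k2) h ?orbT.
Qed.
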